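(* Let $N\ge2$, $J=1$, let $h_0,h_1\in\mathbb{R}^N$ satisfy $\|h_0\|=\|h_1\|=1$ and $h_0^{\sf T}h_1=\sin\tau$ with $\tau\in(-\pi/2,\pi/2)$, let $\sigma_0^2,\sigma_1^2,\sigma_n^2>0$ and $c_1\in[-\sigma_0\sigma_1,\sigma_0\sigma_1]$. Then for all $\lambda\ge0$, \[ \mathrm{MSE}(\lambda)=\frac{\delta^2(\sigma_1^2\cos^2\tau+\sigma_n^2)}{g(\lambda)^2}-\frac{2\sigma_n^2\delta\tan\tau}{g(\lambda)}+\sigma_n^2(\tan^2\tau+1), \] where $\delta:=\sigma_n^2\tan\tau-c_1\cos\tau$ and $g(\lambda):=\lambda\cos^2\tau+\sigma_1^2\cos^2\tau+\sigma_n^2>0$. Moreover: 1. If $\delta=0$, then $\mathrm{MSE}(\lambda)=\sigma_n^2(\tan^2\tau+1)$ for all $\lambda\ge0$. 2. If $\delta\ne0$ and $\gamma:=\sigma_n^2\tan\tau/\delta\le0$, then $\mathrm{MSE}(\lambda)$ is decreasing on $[0,\infty)$ and $\inf_{\lambda\ge0}\mathrm{MSE}(\lambda)=\lim_{\lambda\to\infty}\mathrm{MSE}(\lambda)=J_{\rm MSE}(w_{\rm ZF})$, i.e., the ZF beamformer is MSE-optimal among the RZF family. 3. If $\delta\neq0$ and $\gamma>0$, then $\mathrm{MSE}$ is minimized over $[0,\infty)$ by $\lambda=-\dfrac{c_1(\sigma_1^2\cos^2\tau+\sigma_n^2)}{\sigma_n^2\sin\tau}$ (which is $>0$) if $\gamma\in(0,1)$,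 and by $\lambda=0$ if $\gamma\ge1$.
   Context: Real-valued single-interference model: $y(k)=s_0(k)h_0+s_1(k)h_1+n(k)\in\mathbb{R}^N$, with real zero-mean jointly weakly stationary signals $s_0,s_1$, $\sigma_j^2:=E[s_j(k)^2]$, $c_1:=E[s_0(k)s_1(k)]$, and real zero-mean noise $n(k)\sim\mathcal{N}(0,\sigma_n^2I)$ uncorrelated with the signals. $R:=E[y(k)y(k)^{\sf T}]$. For $\lambda\ge0$, $R_\lambda:=R+\lambda h_1h_1^{\sf T}$ and the RZF beamformer is $w_{\rm RZF}(\lambda):=R_\lambda^{-1}h_0/(h_0^{\sf T}R_\lambda^{-1}h_0)$. The ZF beamformer is $w_{\rm ZF}:=R^{-1}H(H^{\sf T}R^{-1}H)^{-1}e_1$ with $H:=[h_0\ h_1]$ and $e_1:=[1,0]^{\sf T}$. The MSE of a beamformer $w$ is $J_{\rm MSE}(w):=E[(w^{\sf T}y(k)-s_0(k))^2]$, and $\mathrm{MSE}(\lambda):=J_{\rm MSE}(w_{\rm RZF}(\lambda))$. *)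

(* Defs.v *)
From HB Require Import structures.
From mathcomp Require Import all_boot all_order all_algebra.
From mathcomp Require Import all_classical all_reals all_analysis.
Set Implicit Arguments. Unset Strict Implicit. Unset Printing Implicit Defensive.
Import Order.TTheory GRing.Theory Num.Theory.
Import numFieldNormedType.Exports.
Local Open Scope ring_scope.

(* Second-order statistics of the model y = s0 h0 + s1 h1 + n.
   Parameters: sig0, sig1, sign are the standard deviations (so that
   sigma_j^2 = sig_j^2, sigma_n^2 = sign^2), c1 = E[s0 s1]. *)

Definition dot (R : realType) (N : nat) (u v : 'cV[R]_N) : R := (u^T *m v) 0 0.

(* R := E[y y^T] *)
Definition covR (R : realType) (N : nat) (h0 h1 : 'cV[R]_N)
  (sig0 sig1 c1 sign : R) : 'M[R]_N :=
  (sig0 ^+ 2) *: (h0 *m h0^T) + (sig1 ^+ 2) *: (h1 *m h1^T)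
  + c1 *: (h0 *m h1^T + h1 *m h0^T) + (sign ^+ 2)%:M.

(* E[y s0] *)
Definition xcorr (R : realType) (N : nat) (h0 h1 : 'cV[R]_N)
  (sig0 c1 : R) : 'cV[R]_N := (sig0 ^+ 2) *: h0 + c1 *: h1.

(* J_MSE(w) = E[(w^T y - s0)^2] = w^T R w - 2 w^T E[y s0] + E[s0^2] *)
Definition Jmse (R : realType) (N : nat) (h0 h1 : 'cV[R]_N)
  (sig0 sig1 c1 sign : R) (w : 'cV[R]_N) : R :=
  (w^T *m covR h0 h1 sig0 sig1 c1 sign *m w) 0 0
  - 2 * (w^T *m xcorr h0 h1 sig0 c1) 0 0 + sig0 ^+ 2.

Definition wRZF (R : realType) (N : nat) (h0 h1 : 'cV[R]_N)
  (sig0 sig1 c1 sign : R) (lam : R) : 'cV[R]_N :=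
  let Rl := covR h0 h1 sig0 sig1 c1 sign + lam *: (h1 *m h1^T) in
  ((h0^T *m invmx Rl *m h0) 0 0)^-1 *: (invmx Rl *m h0).

Definition wZF (R : realType) (N : nat) (h0 h1 : 'cV[R]_N)
  (sig0 sig1 c1 sign : R) : 'cV[R]_N :=
  let Ri := invmx (covR h0 h1 sig0 sig1 c1 sign) in
  let H : 'M[R]_(N, 1 + 1) := row_mx h0 h1 in
  Ri *m H *m invmx (H^T *m Ri *m H) *m (delta_mx 0 0 : 'cV[R]_(1 + 1)).

Definition MSE (R : realType) (N : nat) (h0 h1 : 'cV[R]_N)
  (sig0 sig1 c1 sign : R) (lam : R) : R :=
  Jmse h0 h1 sig0 sig1 c1 sign (wRZF h0 h1 sig0 sig1 c1 sign lam).

(* Main.v *)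
Require Import Defs.
From HB Require Import structures.
From mathcomp Require Import all_boot all_order all_algebra.
From mathcomp Require Import all_classical all_reals all_analysis.
From mathcomp Require Import ring lra.
Import Order.TTheory GRing.Theory Num.Theory.
Import numFieldNormedType.Exports.
Local Open Scope classical_set_scope.
Local Open Scope ring_scope.

Lemma dotE {R : realType} {N : nat} (u v : 'cV[R]_N) : u^T *m v = (dot u v)%:M.
Proof. by rewrite /dot -mx11_scalar. Qed.

Lemma dotC {R : realType} {N : nat} (u v : 'cV[R]_N) : dot u v = dot v u.
Proof. by rewrite /dot !mxE; apply: eq_bigr => i _; rewrite !mxE mulrC. Qed.

Lemma dotDr {R : realType} {N : nat} (u v w : 'cV[R]_N) : dot u (v + w) = dot u v + dot u w.
Proof. by rewrite /dot mulmxDr mxE. Qed.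

Lemma dotZr {R : realType} {N : nat} (u v : 'cV[R]_N) a : dot u (a *: v) = a * dot u v.
Proof. by rewrite /dot -scalemxAr mxE. Qed.

Lemma dotDl {R : realType} {N : nat} (u v w : 'cV[R]_N) : dot (v + w) u = dot v u + dot w u.
Proof. by rewrite dotC dotDr !(dotC u). Qed.

Lemma dotZl {R : realType} {N : nat} (u v : 'cV[R]_N) a : dot (a *: v) u = a * dot v u.
Proof. by rewrite dotC dotZr dotC. Qed.

Lemma outerE {R : realType} {N : nat} (u v x : 'cV[R]_N) : (u *m v^T) *m x = dot v x *: u.
Proof. by rewrite -mulmxA dotE mul_mx_scalar. Qed.

Lemma dot_ge0 {R : realType} {N : nat} (u : 'cV[R]_N) : 0 <= dot u u.
Proof. rewrite /dot mxE; apply: sumr_ge0 => i _; rewrite !mxE -expr2; exact: sqr_ge0. Qed.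

Lemma dot_eq0 {R : realType} {N : nat} (u : 'cV[R]_N) : dot u u = 0 -> u = 0.
Proof.
rewrite /dot mxE => /eqP; rewrite psumr_eq0 => [/allP H|i _]; last by rewrite !mxE -expr2 sqr_ge0.
apply/matrixP => i j; rewrite (ord1 j) !mxE.
have := H i (mem_index_enum _); rewrite !mxE /= => /eqP.
by move=> /eqP; rewrite mulf_eq0 orbb => /eqP.
Qed.

Lemma covR_act {R : realType} {N : nat} (h0 h1 : 'cV[R]_N) (s0 s1 c1 sn lam : R) x :
  (covR h0 h1 s0 s1 c1 sn + lam *: (h1 *m h1^T)) *m x =
  (s0^+2 * dot h0 x + c1 * dot h1 x) *: h0
  + ((s1^+2 + lam) * dot h1 x + c1 * dot h0 x) *: h1 + sn^+2 *: x.
Proof.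
rewrite /covR !mulmxDl -!scalemxAl !mulmxDl !outerE mul_scalar_mx.
rewrite !scalerA !scalerDl !scalerDr !scalerA.
rewrite !(mulrC _ (dot _ x)) mulrDr scalerDl.
move: (_ *: h0) (_ *: h0) (_ *: h1) (_ *: h1) (_ *: h1) (_ *: x) => a b c d e f.
rewrite -!addrA; congr (_ + _); rewrite [LHS]addrCA; congr (_ + _).
congr (_ + _); by rewrite [LHS]addrC -addrA [LHS]addrC -addrA.
Qed.

Lemma covR_act0 {R : realType} {N : nat} (h0 h1 : 'cV[R]_N) (s0 s1 c1 sn : R) x :
  covR h0 h1 s0 s1 c1 sn *m x =
  (s0^+2 * dot h0 x + c1 * dot h1 x) *: h0
  + (s1^+2 * dot h1 x + c1 * dot h0 x) *: h1 + sn^+2 *: x.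
Proof. by have := covR_act h0 h1 s0 s1 c1 sn 0 x; rewrite scale0r addr0 addr0. Qed.

Lemma quadR {R : realType} {N : nat} (h0 h1 : 'cV[R]_N) (s0 s1 c1 sn lam : R) x :
  dot x ((covR h0 h1 s0 s1 c1 sn + lam *: (h1 *m h1^T)) *m x) =
  s0^+2 * dot h0 x ^+ 2 + 2 * c1 * dot h0 x * dot h1 x
  + (s1^+2 + lam) * dot h1 x ^+ 2 + sn^+2 * dot x x.
Proof.
rewrite covR_act !dotDr !dotZr !(dotC x h0) !(dotC x h1); ring.
Qed.

Lemma psd2 {R : realType} (s0 s1 c1 p q : R) : 0 < s0 -> 0 < s1 ->
  - (s0 * s1) <= c1 <= s0 * s1 ->
  0 <= s0^+2 * p ^+ 2 + 2 * c1 * p * q + s1^+2 * q ^+ 2.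
Proof.
move=> h0 h1 /andP [hc1 hc2].
have H : 0 <= (s0 * s1 + c1) * (s0 * p + s1 * q)^+2 + (s0 * s1 - c1) * (s0 * p - s1 * q)^+2.
  apply: addr_ge0; apply: mulr_ge0; rewrite ?sqr_ge0 //; lra.
have E : (s0 * s1 + c1) * (s0 * p + s1 * q)^+2 + (s0 * s1 - c1) * (s0 * p - s1 * q)^+2
   = 2 * (s0 * s1) * (s0^+2 * p ^+ 2 + 2 * c1 * p * q + s1^+2 * q ^+ 2) by ring.
rewrite E in H; have hp : 0 < 2 * (s0 * s1) by rewrite mulr_gt0 // mulr_gt0.
by rewrite -(pmulr_rge0 _ hp).
Qed.

Lemma posdef {R : realType} {N : nat} (h0 h1 : 'cV[R]_N) (s0 s1 c1 sn lam : R) x :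
  0 < s0 -> 0 < s1 -> 0 < sn -> - (s0 * s1) <= c1 <= s0 * s1 -> 0 <= lam ->
  sn^+2 * dot x x <= dot x ((covR h0 h1 s0 s1 c1 sn + lam *: (h1 *m h1^T)) *m x).
Proof.
move=> p0 p1 pn hc hl; rewrite quadR.
have := @psd2 _ _ _ _ (dot h0 x) (dot h1 x) p0 p1 hc.
have : 0 <= lam * dot h1 x ^+ 2 by rewrite mulr_ge0 ?sqr_ge0.
lra.
Qed.

Lemma unit_of_inj {R : realType} {n : nat} (A : 'M[R]_n) :
  (forall x : 'cV[R]_n, A *m x = 0 -> x = 0) -> A \in unitmx.
Proof.
move=> H; rewrite -unitmx_tr unitmxE unitfE; apply/negP => /det0P [v nv vA].
move: nv; rewrite -trmx_eq0 (H v^T) ?eqxx //.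
by rewrite -[A]trmxK -trmx_mul vA trmx0.
Qed.

Lemma Jmse_dist {R : realType} {N : nat} (h0 h1 : 'cV[R]_N) (s0 s1 c1 sn : R) w :
  dot h0 w = 1 ->
  Jmse h0 h1 s0 s1 c1 sn w = s1^+2 * dot h1 w ^+ 2 + sn^+2 * dot w w.
Proof.
move=> hw; rewrite /Jmse -mulmxA -/(dot w _) covR_act0 -/(dot w _) /xcorr.
rewrite !dotDr !dotZr !(dotC w h0) !(dotC w h1) hw; ring.
Qed.

Lemma wRZF_eq {R : realType} {N : nat} (h0 h1 : 'cV[R]_N) (a c s0 s1 c1 sn lam : R) :
  dot h0 h0 = 1 -> dot h1 h1 = 1 -> dot h0 h1 = a -> 0 < c -> a^+2 + c^+2 = 1 ->
  0 < s0 -> 0 < s1 -> 0 < sn -> - (s0 * s1) <= c1 <= s0 * s1 -> 0 <= lam ->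
  let g := lam * c^+2 + s1^+2 * c^+2 + sn^+2 in
  let b := (sn^+2 * a - c1 * c^+2) / g in
  MSE h0 h1 s0 s1 c1 sn lam = s1^+2 * b^+2 + sn^+2 * (1 + (b - a)^+2 / c^+2).
Proof.
move=> h00 h11 h01 cp hac p0 p1 pn hc1 hl g b.
have gp : 0 < g.
  have := mulr_ge0 hl (sqr_ge0 c); have := exprn_gt0 2 pn.
  have := mulr_gt0 (exprn_gt0 2 p1) (exprn_gt0 2 cp); rewrite /g; lra.
have cn : c != 0 by rewrite gt_eqF.
have gn : g != 0 by rewrite gt_eqF.
set be := (b - a) / c^+2; set al := 1 - a * be; set w0 := al *: h0 + be *: h1.
have d0 : dot h0 w0 = 1 by rewrite /w0 dotDr !dotZr h00 h01 /al; ring.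
have d1 : dot h1 w0 = b.
  rewrite /w0 dotDr !dotZr h11 dotC h01.
  have -> : al * a + be * 1 = a + (1 - a^+2) * be by rewrite /al; ring.
  rewrite (_ : 1 - a^+2 = c^+2); last by lra.
  by rewrite /be; field; rewrite ?cn.
have ww : dot w0 w0 = 1 + (b - a)^+2 / c^+2.
  rewrite {1}/w0 dotDl !dotZl d0 d1 /al /be; field; rewrite ?cn //.
set Rl := covR h0 h1 s0 s1 c1 sn + lam *: (h1 *m h1^T).
have Ru : Rl \in unitmx.
  apply: unit_of_inj => x Hx.
  have := @posdef _ _ h0 h1 s0 s1 c1 sn lam x p0 p1 pn hc1 hl; rewrite -/Rl Hx (_ : dot x 0 = 0); last by rewrite /dot mulmx0 mxE.
  move=> H; apply: dot_eq0; apply/eqP; rewrite eq_le dot_ge0 andbT.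
  move: H; have := exprn_gt0 2 pn; have := dot_ge0 x; nra.
set k := s0^+2 + c1 * b + sn^+2 * al.
have Rw : Rl *m w0 = k *: h0.
  rewrite /Rl covR_act d0 d1.
  have c0 : (s1 ^+ 2 + lam) * b + c1 * 1 + sn^+2 * be = 0.
    rewrite /be /b /g; field; rewrite ?exprMn -/g ?cn ?gn //.
  rewrite /w0 scalerDr !scalerA addrACA -!scalerDl c0 scale0r addr0 /k mulr1 //.
have kp : 0 < k.
  have := @posdef _ _ h0 h1 s0 s1 c1 sn lam w0 p0 p1 pn hc1 hl.
  rewrite -/Rl Rw dotZr dotC d0 mulr1 ww.
  have : 0 <= (b - a) ^+ 2 / c ^+ 2 by rewrite divr_ge0 ?sqr_ge0.
  have := exprn_gt0 2 pn; nra.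
have iw : invmx Rl *m h0 = k^-1 *: w0.
  by rewrite -[w0](mulKmx Ru) Rw -scalemxAr scalerA mulVf ?gt_eqF // scale1r.
rewrite /MSE /wRZF -/Rl -mulmxA iw.
rewrite (_ : (h0^T *m (k^-1 *: w0)) 0 0 = k^-1); last first.
  by rewrite -scalemxAr mxE -/(dot h0 w0) d0 mulr1.
rewrite scalerA mulVf ?invr_eq0 ?gt_eqF // scale1r Jmse_dist // d1 ww //.
Qed.

Lemma Hmul {R : realType} {N : nat} (h0 h1 : 'cV[R]_N) (x : 'cV[R]_(1 + 1)) :
  row_mx h0 h1 *m x = (usubmx x 0 0) *: h0 + (dsubmx x 0 0) *: h1.
Proof.
rewrite -{1}[x]vsubmxK mul_row_col {1}(mx11_scalar (usubmx x)) {1}(mx11_scalar (dsubmx x)). by rewrite !mul_mx_scalar.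
Qed.

Lemma HTmul {R : realType} {N : nat} (h0 h1 : 'cV[R]_N) (z : 'cV[R]_N) :
  (row_mx h0 h1)^T *m z = col_mx (dot h0 z)%:M (dot h1 z)%:M.
Proof. by rewrite tr_row_mx mul_col_mx !dotE. Qed.

Lemma Rl_unit {R : realType} {N : nat} (h0 h1 : 'cV[R]_N) (s0 s1 c1 sn lam : R) :
  0 < s0 -> 0 < s1 -> 0 < sn -> - (s0 * s1) <= c1 <= s0 * s1 -> 0 <= lam ->
  (covR h0 h1 s0 s1 c1 sn + lam *: (h1 *m h1^T)) \in unitmx.
Proof.
move=> p0 p1 pn hc1 hl.
apply: unit_of_inj => x Hx.
have := @posdef _ _ h0 h1 s0 s1 c1 sn lam x p0 p1 pn hc1 hl.
rewrite Hx (_ : dot x 0 = 0); last by rewrite /dot mulmx0 mxE.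
move=> H; apply: dot_eq0; apply/eqP; rewrite eq_le dot_ge0 andbT.
move: H; have := exprn_gt0 2 pn; have := dot_ge0 x; nra.
Qed.

Lemma dot0r {R : realType} {N : nat} (u : 'cV[R]_N) : dot u 0 = 0.
Proof. by rewrite /dot mulmx0 mxE. Qed.

Lemma sq_le0 {R : realType} (sn d : R) : 0 < sn -> 0 <= d -> sn^+2 * d <= 0 -> d = 0.
Proof. move=> pn d0 H; apply/eqP; rewrite eq_le d0 andbT; have := exprn_gt0 2 pn; nra. Qed.

Lemma lin2 {R : realType} (a c p q : R) : c != 0 -> a^+2 + c^+2 = 1 ->
  p + q * a = 0 -> p * a + q = 0 -> p = 0 /\ q = 0.
Proof.
move=> cn hac e0 e1.
have E : p * c^+2 = (p + q * a) - a * (p * a + q) + p * (a^+2 + c^+2 - 1) by ring.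
have E' : p * c^+2 = 0 by rewrite E e0 e1 hac; ring.
have hp : p = 0 by apply: (mulIf (expf_neq0 2 cn)); rewrite mul0r.
by split => //; move: e1; rewrite hp mul0r add0r.
Qed.

Lemma wZF_eq {R : realType} {N : nat} (h0 h1 : 'cV[R]_N) (a c s0 s1 c1 sn : R) :
  dot h0 h0 = 1 -> dot h1 h1 = 1 -> dot h0 h1 = a -> 0 < c -> a^+2 + c^+2 = 1 ->
  0 < s0 -> 0 < s1 -> 0 < sn -> - (s0 * s1) <= c1 <= s0 * s1 ->
  Jmse h0 h1 s0 s1 c1 sn (wZF h0 h1 s0 s1 c1 sn) = sn^+2 / c^+2.
Proof.
move=> h00 h11 h01 cp hac p0 p1 pn hc1.
have cn : c != 0 by rewrite gt_eqF.
have hl0 : (0 : R) <= 0 by [].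
have R0E : covR h0 h1 s0 s1 c1 sn = covR h0 h1 s0 s1 c1 sn + 0 *: (h1 *m h1^T).
  by rewrite scale0r addr0.
have Ru := @Rl_unit _ _ h0 h1 s0 s1 c1 sn 0 p0 p1 pn hc1 hl0; rewrite -R0E in Ru.
set R0 := covR h0 h1 s0 s1 c1 sn in R0E Ru *.
set H := row_mx h0 h1.
set P := H^T *m invmx R0 *m H.
have Pu : P \in unitmx.
  apply: unit_of_inj => x Px.
  set u := invmx R0 *m (H *m x).
  have HTu : H^T *m u = 0 by rewrite /u !mulmxA -[H^T *m _ *m _]/P Px.
  have Ru0 : R0 *m u = H *m x by rewrite /u mulKVmx.
  have uu : dot u (R0 *m u) = 0.
    rewrite Ru0 /dot mulmxA -[u^T *m H]trmxK trmx_mul trmxK HTu trmx0 !mul0mx mxE //.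
  have := @posdef _ _ h0 h1 s0 s1 c1 sn 0 u p0 p1 pn hc1 hl0; rewrite -R0E -/R0 uu => Hu.
  have u0 : u = 0.
    by apply: dot_eq0; apply: (@sq_le0 _ sn _ pn (dot_ge0 u) Hu).
  move: Ru0; rewrite u0 mulmx0 /H Hmul => /esym E.
  have e0 := congr1 (dot h0) E; have e1 := congr1 (dot h1) E.
  move: e0 e1; rewrite !dotDr !dotZr h00 h11 (dotC h1 h0) h01.
  rewrite !dot0r.
  rewrite !mulr1 => e0 e1.
  have [hp hq] := @lin2 _ a c _ _ cn hac e0 e1.
  rewrite -[x]vsubmxK (mx11_scalar (usubmx x)) (mx11_scalar (dsubmx x)) hp hq.
  by apply/matrixP => i j; rewrite !mxE; case: splitP => ? _; rewrite !mxE mul0rn.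
rewrite /wZF -/R0 -/H -/P.
set e := delta_mx 0 0 : 'cV[R]_(1 + 1).
set y := invmx P *m e.
set z := invmx R0 *m H *m invmx P *m e.
have HTz : H^T *m z = e by rewrite /z !mulmxA -/P mulmxV // mul1mx.
rewrite /H HTmul -/H in HTz.
have d0 : dot h0 z = 1.
  have := congr1 (fun M => usubmx M 0 0) HTz; rewrite /= col_mxKu !mxE /=.
  by rewrite mulr1n.
have d1 : dot h1 z = 0.
  have := congr1 (fun M => dsubmx M 0 0) HTz; rewrite /= col_mxKd !mxE /=.
  by rewrite mulr1n.
have Rz : R0 *m z = H *m y by rewrite /z /y -!mulmxA mulKVmx.
rewrite covR_act0 d0 d1 /H Hmul -/H in Rz.
have f0 := congr1 (dot h0) Rz; have f1 := congr1 (dot h1) Rz; have fz := congr1 (dot z) Rz.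
move: f0 f1 fz; rewrite !dotDr !dotZr h00 h11 (dotC h1 h0) h01 !(dotC z) d0 d1.
move=> f0 f1 fz.
rewrite Jmse_dist // d1.
move: f0 f1 fz; set Y0 := usubmx y 0 0; set Y1 := dsubmx y 0 0; set D := dot z z.
move=> f0 f1 fz.
have g0 : (Y0 - s0^+2) + (Y1 - c1) * a = sn^+2 by move: f0; clear; lra.
have g1 : (Y0 - s0^+2) * a + (Y1 - c1) = 0 by move: f1; clear; lra.
have E1 : (Y0 - s0^+2) * c^+2 = ((Y0 - s0^+2) + (Y1 - c1) * a) - a * ((Y0 - s0^+2) * a + (Y1 - c1)) + (Y0 - s0^+2) * (a^+2 + c^+2 - 1) by ring.
rewrite g0 g1 hac subrr !mulr0 subr0 addr0 in E1.
have -> : sn^+2 * D = Y0 - s0^+2 by move: fz; clear; lra.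
rewrite -E1; field; rewrite ?cn //.
Qed.

Lemma Q1 {R : realType} (D gm u1 u2 : R) : 0 < D -> gm <= 0 -> 0 < u2 -> u2 < u1 ->
  D * u2^+2 - 2 * gm * u2 < D * u1^+2 - 2 * gm * u1.
Proof.
move=> Dp gl u2p lt.
have E : D * u1^+2 - 2 * gm * u1 - (D * u2^+2 - 2 * gm * u2) = (u1 - u2) * (D * (u1 + u2) - 2 * gm) by ring.
have : 0 < (u1 - u2) * (D * (u1 + u2) - 2 * gm).
  apply: mulr_gt0; first lra.
  have : 0 < D * (u1 + u2) by apply: mulr_gt0 => //; lra.
  lra.
rewrite -E; lra.
Qed.

Lemma Q0 {R : realType} (D gm u : R) : 0 < D -> gm <= 0 -> 0 < u ->
  0 < D * u^+2 - 2 * gm * u.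
Proof.
move=> Dp gl up.
have h1 : 0 < D * u^+2 by rewrite mulr_gt0 // exprn_gt0.
have h2 : 0 <= - gm * u by rewrite mulr_ge0 // ?oppr_ge0 // ltW.
lra.
Qed.

Lemma Q2 {R : realType} (D gm u : R) : 0 < D ->
  D * (gm / D)^+2 - 2 * gm * (gm / D) <= D * u^+2 - 2 * gm * u.
Proof.
move=> Dp.
have E : D * u^+2 - 2 * gm * u - (D * (gm / D)^+2 - 2 * gm * (gm / D)) = D * (u - gm / D)^+2.
  by field; rewrite gt_eqF.
have : 0 <= D * (u - gm / D)^+2 by rewrite mulr_ge0 ?sqr_ge0 // ltW.
rewrite -E; lra.
Qed.

Lemma Q3 {R : realType} (D gm u : R) : 0 < D -> 1 <= gm -> 0 < u -> u <= D^-1 ->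
  D * (D^-1)^+2 - 2 * gm * D^-1 <= D * u^+2 - 2 * gm * u.
Proof.
move=> Dp g1 up uD.
have E : D * u^+2 - 2 * gm * u - (D * (D^-1)^+2 - 2 * gm * D^-1) = (D^-1 - u) * (2 * gm - D * (u + D^-1)).
  by field; rewrite gt_eqF.
have Du : D * u <= 1 by rewrite -(@mulfV _ D) ?gt_eqF // ler_pM2l.
have : 0 <= (D^-1 - u) * (2 * gm - D * (u + D^-1)).
  apply: mulr_ge0; first lra.
  rewrite mulrDr mulfV ?gt_eqF //; lra.
rewrite -E; lra.
Qed.

Lemma limQ {R : realType} (d2 D gm eps g : R) : 0 <= d2 -> 0 < D -> 0 < eps ->
  1 + (d2 * D + 2 * d2 * `|gm|) / eps < g ->
  `|d2 * (D * (g^-1)^+2 - 2 * gm * g^-1)| < eps.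
Proof.
move=> d2p Dp ep hg.
set K := d2 * D + 2 * d2 * `|gm|.
have K0 : 0 <= K by have := ltW Dp; have := normr_ge0 gm; rewrite /K; nra.
have Ke : 0 <= K / eps by rewrite divr_ge0 // ltW.
have g1 : 1 < g by apply: (le_lt_trans _ hg); rewrite lerDl.
have gp : 0 < g by lra.
set u := g^-1.
have up : 0 < u by rewrite invr_gt0.
have u1 : u < 1 by rewrite invf_lt1.
have Ku : K * u < eps.
  have Kg : K < eps * g.
    have E : eps * (K / eps) = K by field; rewrite gt_eqF.
    rewrite -{1}E ltr_pM2l //; apply: (lt_trans _ hg); rewrite -[X in X < _]add0r ltrD2r ltr01 //.
  by rewrite /u ltr_pdivrMr // mulrC.
have hb : `|D * u^+2 - 2 * gm * u| <= D * u + 2 * `|gm| * u.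
  have a1 : `|D * u^+2| <= D * u.
    rewrite ger0_norm; last by rewrite mulr_ge0 ?sqr_ge0 // ltW.
    have H1 : 0 <= 1 - u by rewrite subr_ge0 ltW.
    have := mulr_ge0 (mulr_ge0 (ltW Dp) (ltW up)) H1 => H.
    rewrite expr2; move: H; clear; nra.
  have a2 : `|2 * gm * u| = 2 * `|gm| * u by rewrite !normrM (ger0_norm (ltW up)) ger0_norm.
  apply: le_trans; first exact: ler_normB.
  by rewrite a2 lerD2r.
rewrite normrM ger0_norm //.
apply: (le_lt_trans _ Ku); rewrite /K.
have -> : (d2 * D + 2 * d2 * `|gm|) * u = d2 * (D * u + 2 * `|gm| * u) by ring.
by rewrite ler_wpM2l.
Qed.

Lemma mse_formula {R : realType} {N : nat} (h0 h1 : 'cV[R]_N) (tau s0 s1 sn c1 lam : R) :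
  dot h0 h0 = 1 -> dot h1 h1 = 1 -> dot h0 h1 = sin tau -> 0 < cos tau ->
  0 < s0 -> 0 < s1 -> 0 < sn -> - (s0 * s1) <= c1 <= s0 * s1 -> 0 <= lam ->
  MSE h0 h1 s0 s1 c1 sn lam =
  (sn ^+ 2 * tan tau - c1 * cos tau) ^+ 2 * (s1 ^+ 2 * cos tau ^+ 2 + sn ^+ 2)
     / (lam * cos tau ^+ 2 + s1 ^+ 2 * cos tau ^+ 2 + sn ^+ 2) ^+ 2
  - 2 * sn ^+ 2 * (sn ^+ 2 * tan tau - c1 * cos tau) * tan tau
     / (lam * cos tau ^+ 2 + s1 ^+ 2 * cos tau ^+ 2 + sn ^+ 2)
  + sn ^+ 2 * (tan tau ^+ 2 + 1).
Proof.
move=> h00 h11 h01 cp p0 p1 pn hc1 hl.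
have hac : sin tau ^+ 2 + cos tau ^+ 2 = 1 by rewrite sin2cos2; ring.
rewrite (@wRZF_eq _ _ h0 h1 (sin tau) (cos tau)) //.
have gp : 0 < lam * cos tau ^+ 2 + s1 ^+ 2 * cos tau ^+ 2 + sn ^+ 2.
  have := mulr_ge0 hl (sqr_ge0 (cos tau)); have := exprn_gt0 2 pn.
  have := mulr_gt0 (exprn_gt0 2 p1) (exprn_gt0 2 cp); lra.
move: gp; set g := (lam * _ + _ + _) => gp.
have gn : g != 0 by rewrite gt_eqF.
have cn : cos tau != 0 by rewrite gt_eqF.
rewrite /tan; field; by rewrite cn gn.
Qed.

Theorem theorem1 (R : realType) (N : nat) (h0 h1 : 'cV[R]_N)
  (tau sig0 sig1 sign c1 : R) :
  (2 <= N)%N ->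
  Num.sqrt (dot h0 h0) = 1 -> Num.sqrt (dot h1 h1) = 1 ->
  - (pi / 2) < tau < pi / 2 -> dot h0 h1 = sin tau ->
  0 < sig0 -> 0 < sig1 -> 0 < sign ->
  - (sig0 * sig1) <= c1 <= sig0 * sig1 ->
  let mse := MSE h0 h1 sig0 sig1 c1 sign in
  let delta := sign ^+ 2 * tan tau - c1 * cos tau in
  let g := fun lam : R => lam * cos tau ^+ 2 + sig1 ^+ 2 * cos tau ^+ 2 + sign ^+ 2 in
  let gamma := sign ^+ 2 * tan tau / delta in
  (forall lam : R, 0 <= lam ->
     0 < g lam /\
     mse lam = delta ^+ 2 * (sig1 ^+ 2 * cos tau ^+ 2 + sign ^+ 2) / g lam ^+ 2
               - 2 * sign ^+ 2 * delta * tan tau / g lam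
               + sign ^+ 2 * (tan tau ^+ 2 + 1))
  /\ (delta = 0 -> forall lam : R, 0 <= lam -> mse lam = sign ^+ 2 * (tan tau ^+ 2 + 1))
  /\ (delta != 0 -> gamma <= 0 ->
        (forall x y : R, 0 <= x -> x < y -> mse y < mse x)
        /\ (mse x @[x --> +oo] --> (Jmse h0 h1 sig0 sig1 c1 sign (wZF h0 h1 sig0 sig1 c1 sign) : R))
        /\ inf [set mse lam | lam in [set x : R | 0 <= x]]
             = Jmse h0 h1 sig0 sig1 c1 sign (wZF h0 h1 sig0 sig1 c1 sign))
  /\ (delta != 0 -> 0 < gamma < 1 ->
        let lstar := - (c1 * (sig1 ^+ 2 * cos tau ^+ 2 + sign ^+ 2)) / (sign ^+ 2 * sin tau) in
        0 < lstar /\ forall lam : R, 0 <= lam -> mse lstar <= mse lam)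
  /\ (delta != 0 -> 1 <= gamma ->
        forall lam : R, 0 <= lam -> mse 0 <= mse lam).
Proof.
move=> N2 nh0 nh1 htau h01 p0 p1 pn hc1 mse delta g gamma.
have h00 : dot h0 h0 = 1 by rewrite -(sqr_sqrtr (dot_ge0 h0)) nh0 expr1n.
have h11 : dot h1 h1 = 1 by rewrite -(sqr_sqrtr (dot_ge0 h1)) nh1 expr1n.
have cp := cos_gt0_pihalf htau.
have cn : cos tau != 0 by rewrite gt_eqF.
have hac : sin tau ^+ 2 + cos tau ^+ 2 = 1 by rewrite sin2cos2; ring.
have c2p : 0 < cos tau ^+ 2 by rewrite exprn_gt0.
have Dp : 0 < sig1^+2 * cos tau^+2 + sign^+2.
  by rewrite addr_gt0 ?exprn_gt0 // mulr_gt0 ?exprn_gt0.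
have gp : forall lam, 0 <= lam -> 0 < g lam.
  move=> lam hl; rewrite /g -addrA; apply: ltr_wpDl => //; exact: mulr_ge0 hl (ltW c2p).
have Hm : forall lam, 0 <= lam -> mse lam =
    delta ^+ 2 * (sig1 ^+ 2 * cos tau ^+ 2 + sign ^+ 2) / g lam ^+ 2
    - 2 * sign ^+ 2 * delta * tan tau / g lam + sign ^+ 2 * (tan tau ^+ 2 + 1).
  by move=> lam hl; apply: mse_formula.
have ZF : Jmse h0 h1 sig0 sig1 c1 sign (wZF h0 h1 sig0 sig1 c1 sign) = sign ^+ 2 * (tan tau ^+ 2 + 1).
  rewrite (@wZF_eq _ _ h0 h1 (sin tau) (cos tau)) //.
  have -> : sign ^+ 2 * (tan tau ^+ 2 + 1) = sign ^+ 2 * (sin tau ^+ 2 + cos tau ^+ 2) / cos tau ^+ 2.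
    by rewrite /tan; field.
  by rewrite hac mulr1.
set D := sig1 ^+ 2 * cos tau ^+ 2 + sign ^+ 2 in Dp Hm.
set L := sign ^+ 2 * (tan tau ^+ 2 + 1) in Hm ZF *.
have HQ : delta != 0 -> forall lam, 0 <= lam ->
    mse lam = delta ^+ 2 * (D * (g lam)^-1 ^+ 2 - 2 * gamma * (g lam)^-1) + L.
  move=> dn lam hl; have gn : g lam != 0 by rewrite gt_eqF ?gp.
  by rewrite Hm // /gamma; field; rewrite gn dn.
split.
  by move=> lam hl; split; [exact: gp | exact: Hm].
split.
  by move=> d0 lam hl; rewrite Hm // d0; ring.
split.
  move=> dn gl0.
  have d2p : 0 < delta ^+ 2 by rewrite exprn_even_gt0 //= dn.
  have Hdec : forall x y : R, 0 <= x -> x < y -> mse y < mse x.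
    move=> x y x0 xy; have y0 : 0 <= y by apply: le_trans x0 (ltW xy).
    rewrite !(HQ dn) // ltrD2r ltr_pM2l //; apply: Q1 => //.
      by rewrite invr_gt0 gp.
    rewrite ltf_pV2 ?posrE ?gp //.
    have : x * cos tau ^+ 2 < y * cos tau ^+ 2 by rewrite ltr_pM2r.
    by rewrite /g; lra.
  set K := delta ^+ 2 * D + 2 * delta ^+ 2 * `|gamma|.
  have approx : forall eps, 0 < eps -> forall x, (1 + K / eps) / cos tau ^+ 2 < x ->
      0 <= x /\ `|L - mse x| < eps.
    move=> eps ep x Mx.
    have K0 : 0 <= K.
      rewrite /K; apply: addr_ge0; first by apply: mulr_ge0; apply: ltW.
      by apply: mulr_ge0 => //; apply: mulr_ge0 => //; apply: ltW.
    have M0 : 0 <= (1 + K / eps) / cos tau ^+ 2.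
      by rewrite divr_ge0 ?(ltW c2p) // addr_ge0 // divr_ge0 // ltW.
    have x0 : 0 <= x by apply: le_trans M0 (ltW Mx).
    split => //.
    rewrite (HQ dn) // [_ + L]addrC opprD addrA subrr sub0r normrN.
    apply: limQ => //; first exact: ltW.
    move: Mx; rewrite ltr_pdivrMr // -/K => Mx.
    apply: (lt_le_trans Mx); rewrite /g -addrA lerDl; exact: ltW.
  split => //.
  split.
    rewrite ZF; apply/cvgrPdist_lt => eps ep.
    exists ((1 + K / eps) / cos tau ^+ 2); split; first exact: num_real.
    by move=> x Mx; have [] := approx eps ep x Mx.
  rewrite ZF.
  have lb : lbound [set mse lam | lam in [set x : R | 0 <= x]] L.
    move=> _ [lam hl <-]; rewrite (HQ dn) // lerDr; apply: mulr_ge0; first exact: ltW.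
    by apply: ltW; apply: Q0 => //; rewrite invr_gt0 gp.
  apply/eqP; rewrite eq_le; apply/andP; split; last first.
    by apply: lb_le_inf lb; exists (mse 0); exists 0 => //=.
  apply/ler_addgt0Pr => eps ep.
  have Mlt : (1 + K / eps) / cos tau ^+ 2 < (1 + K / eps) / cos tau ^+ 2 + 1 by rewrite ltrDl.
  have [x0 hx] := approx eps ep _ Mlt.
  set x := (1 + K / eps) / cos tau ^+ 2 + 1 in x0 hx.
  have Sx : [set mse lam | lam in [set x : R | 0 <= x]] (mse x) by exists x.
  have := ge_inf (ex_intro _ L lb) Sx.
  move: hx; rewrite ltr_norml => /andP [ha hb] hi.
  apply: (le_trans hi); move: ha hb; clear; lra.
split.
  move=> dn /andP [g0 g1] lstar.
  have Edt : sign ^+ 2 * tan tau = delta + c1 * cos tau by rewrite /delta; ring.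
  have tn : sign ^+ 2 * tan tau != 0.
    apply/negP => /eqP t0; move: g0; by rewrite /gamma t0 mul0r ltxx.
  have Esa : sign ^+ 2 * sin tau = (delta + c1 * cos tau) * cos tau.
    by rewrite -Edt /tan; field.
  have dcn : delta + c1 * cos tau != 0 by rewrite -Edt.
  have glstar : g lstar = D / gamma.
    by rewrite /g /lstar Esa /gamma Edt /D; field; rewrite dn dcn cn.
  have DgD : D < D / gamma by rewrite ltr_pdivlMr // gtr_pMr.
  have lp : 0 < lstar.
    have : 0 < lstar * cos tau ^+ 2.
      have E : lstar * cos tau ^+ 2 = g lstar - D by rewrite /g /D; ring.
      by rewrite E glstar subr_gt0.
    by rewrite pmulr_lgt0.
  split => // lam hl.
  have d2p : 0 <= delta ^+ 2 by rewrite sqr_ge0.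
  rewrite !(HQ dn) // ?(ltW lp) // lerD2r; apply: ler_wpM2l => //.
  rewrite glstar invf_div; exact: Q2.
move=> dn g1 lam hl.
have d2p : 0 <= delta ^+ 2 by rewrite sqr_ge0.
rewrite !(HQ dn) // lerD2r; apply: ler_wpM2l => //.
have -> : g 0 = D by rewrite /g /D mul0r add0r.
apply: Q3 => //; first by rewrite invr_gt0 gp.
rewrite lef_pV2 ?posrE ?gp //.
rewrite /g /D -addrA lerDr; exact: mulr_ge0 hl (ltW c2p).
Qed.
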